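(* Let $L$ be a nonassociative code loop and let $x\in L$ with $x^2=-1$. If the elementary mapping $\tau_x$ is a half-automorphism of $L$, then $x\notin N(L)$.
   Context: A code loop is a finite Moufang loop (loop satisfying $(x\cdot zx)y=x(z\cdot xy)$) with a unique nontrivial square, denoted $-1$. $N(L)$ denotes the nucleus of $L$, the set of elements $a$ with $(a,y,z)=(y,a,z)=(y,z,a)=1$ for all $y,z$, where the associator is defined by $(xy)z=(x(yz))(x,y,z)$. A half-automorphism is a bijection $f$ with $f(xy)\in\{f(x)f(y),f(y)f(x)\}$ for all $x,y$. For $c\in L$, $\tau_c(y)=y^{-1}$ if $y\in\{c,c^{-1}\}$ and $\tau_c(y)=y$ otherwise. *)

(* Defs.v *)
From mathcomp Require Import all_boot.
Set Implicit Arguments. Unset Strict Implicit. Unset Printing Implicit Defensive.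

(* A finite magma (T, mul) with element e is a loop: e is a two-sided
   identity and all left/right translations are injective (hence bijective,
   T being finite). *)
Definition is_loop (T : finType) (mul : T -> T -> T) (e : T) : Prop :=
  (forall x, mul e x = x) /\ (forall x, mul x e = x) /\
  (forall a, injective (mul a)) /\ (forall a, injective (fun x => mul x a)).

Definition moufang (T : Type) (mul : T -> T -> T) : Prop :=
  forall x y z, mul (mul x (mul z x)) y = mul x (mul z (mul x y)).

(* Code loop: finite Moufang loop with a unique nontrivial square m1 (= -1). *)
Definition code_loop (T : finType) (mul : T -> T -> T) (e m1 : T) : Prop :=
  is_loop mul e /\ moufang mul /\ m1 <> e /\
  (exists y, mul y y = m1) /\
  (forall y, mul y y <> e -> mul y y = m1).

Definition nonassociative (T : Type) (mul : T -> T -> T) : Prop :=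
  exists x y z, mul (mul x y) z <> mul x (mul y z).

(* a in N(L): all associators (a,y,z), (y,a,z), (y,z,a) equal 1, where
   (xy)z = (x(yz))(x,y,z); i.e. the corresponding triples associate. *)
Definition in_nucleus (T : Type) (mul : T -> T -> T) (a : T) : Prop :=
  forall y z, mul (mul a y) z = mul a (mul y z) /\
              mul (mul y a) z = mul y (mul a z) /\
              mul (mul y z) a = mul y (mul z a).

Definition linv (T : finType) (mul : T -> T -> T) (e y : T) : T :=
  odflt y [pick z | mul y z == e].

Definition tau (T : finType) (mul : T -> T -> T) (e c : T) (y : T) : T :=
  if (y == c) || (y == linv mul e c) then linv mul e y else y.

Definition half_automorphism (T : Type) (mul : T -> T -> T) (f : T -> T) : Prop :=
  bijective f /\ forall x y, f (mul x y) = mul (f x) (f y) \/ f (mul x y) = mul (f y) (f x).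

(* Main.v *)
Require Import Defs.
From mathcomp Require Import all_boot.

Section Aux.
Variables (T : finType) (mul : T -> T -> T) (e : T).
Hypothesis Hl : is_loop mul e.
Local Notation "a ** b" := (mul a b) (at level 40, left associativity).

Lemma surjL a w : exists u, a ** u = w.
Proof.
have [_ [_ [H _]]] := Hl. have [g _ gK] := injF_bij (H a).
by exists (g w); rewrite gK.
Qed.

Lemma surjR a w : exists u, u ** a = w.
Proof.
have [_ [_ [_ H]]] := Hl. have [g _ gK] := injF_bij (H a).
by exists (g w); rewrite /= in gK; rewrite (gK w).
Qed.

Lemma canL a u v : a ** u = a ** v -> u = v.
Proof. by have [_ [_ [H _]]] := Hl; apply: H. Qed.

Lemma canR a u v : u ** a = v ** a -> u = v.
Proof. by have [_ [_ [_ H]]] := Hl; move=> h; apply: (H a). Qed.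

Lemma nuc_mul a b : in_nucleus mul a -> in_nucleus mul b -> in_nucleus mul (a ** b).
Proof.
move=> Ha Hb y z; split; [|split].
- have [Ha1 _] := Ha y z. have [Hb1 _] := Hb y z.
  have [Ha1' _] := Ha (b ** y) z. have [Ha1'' _] := Ha b y.
  have [Ha2 _] := Ha b (y ** z).
  by rewrite Ha1'' Ha1' Hb1 Ha2.
- have [_ [Hb2 _]] := Hb (y ** a) z. have [_ [_ Ha3]] := Hb y a.
  have [_ [Ha2 _]] := Ha y (b ** z). have [Hb1 _] := Hb a z.
  have [Ha1 _] := Ha b z.
  by rewrite -Ha3 Hb2 Ha2 Ha1.
- have [_ [_ Hb3]] := Hb (y ** z) a. have [_ [_ Ha3]] := Ha y z.
  have [_ [Hb2 _]] := Hb y (z ** a). have [_ [_ Ha3']] := Hb z a.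
  have [_ [_ Hb3']] := Hb y (z ** a).
  by rewrite -Hb3 Ha3 Hb3' Ha3'.
Qed.

End Aux.
Arguments surjL {T mul e} Hl a w.
Arguments surjR {T mul e} Hl a w.
Arguments canL {T mul e} Hl {a u v}.
Arguments canR {T mul e} Hl {a u v}.
Arguments nuc_mul {T mul a b}.

Theorem corollary5p3 (T : finType) (mul : T -> T -> T) (e m1 : T) :
  code_loop mul e m1 -> nonassociative mul ->
  forall x : T, mul x x = m1 ->
  half_automorphism mul (tau mul e x) ->
  ~ in_nucleus mul x.
Proof.
move=> [Hl [Hm [Hne _]]] [a [b [c Habc]]] x Hxx [_ Hh] Nx.
have Hl' := Hl. move: Hl' => [el [er _]].
have [i Hi] : exists i, linv mul e x = i /\ mul x i = e.
  rewrite /linv; case: pickP => [z /eqP Hz | H0]; first by exists z.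
  have [u Hu] := surjL Hl x e. by have := H0 u; rewrite Hu eqxx.
move: Hi => [Hli Hxi].
have Hix : mul i x = e.
  apply: (canL Hl (a:=x)). have [Nx1 _] := Nx i x. by rewrite -Nx1 Hxi el er.
have Hxni : x <> i by move=> E; apply: Hne; rewrite -Hxx; rewrite {2}E.
have Ni : in_nucleus mul i.
  move=> y z; split; [|split].
  - apply: (canL Hl (a:=x)). have [Nx1 _] := Nx (mul i y) z.
    have [Nx1' _] := Nx i y. have [Nx1'' _] := Nx i (mul y z).
    by rewrite -Nx1 -Nx1' Hxi el -Nx1'' Hxi el.
  - have Hz : mul x (mul i z) = z.
      have [Nx1 _] := Nx i z. by rewrite -Nx1 Hxi el.
    have [_ [Nx2 _]] := Nx (mul y i) (mul i z).
    have [_ [_ Nx3]] := Nx y i.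
    by rewrite -{1}Hz -Nx2 Nx3 Hix er.
  - apply: (canR Hl (a:=x)). have [_ [_ N3]] := Nx (mul y z) i.
    have [_ [_ N3']] := Nx y (mul z i). have [_ [_ N3'']] := Nx z i.
    by rewrite N3 Hix er N3' N3'' Hix er.
have Ne : in_nucleus mul e by move=> y z; rewrite !el !er.
have key : forall y, ~ in_nucleus mul y -> mul x y = mul y i.
  move=> y Ny.
  have yx : y != x by apply/eqP=> E; apply: Ny; rewrite E.
  have yi : y != i by apply/eqP=> E; apply: Ny; rewrite E.
  have xyx : mul x y != x.
    apply/eqP=> E; apply: Ny. have -> : y = e by apply: (canL Hl (a:=x)); rewrite E er.
    exact: Ne.
  have xyi : mul x y != i.
    apply/eqP=> E; apply: Ny.
    have -> : y = mul i i.
      have [Ni1 _] := Ni x y. by rewrite -{2}E -Ni1 Hix el.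
    exact: nuc_mul.
  have tx : tau mul e x x = i by rewrite /tau eqxx /= Hli.
  have ty : tau mul e x y = y by rewrite /tau Hli (negbTE yx) (negbTE yi).
  have txy : tau mul e x (mul x y) = mul x y by rewrite /tau Hli (negbTE xyx) (negbTE xyi).
  case: (Hh x y); rewrite tx ty txy // => E.
  by exfalso; apply: Hxni; apply: (canR Hl (a:=y)).
have Na : ~ in_nucleus mul a by move=> H; have [H1 _] := H b c; auto.
have Nb : ~ in_nucleus mul b by move=> H; have [_ [H1 _]] := H a c; auto.
have Nab : ~ in_nucleus mul (mul a b).
  move=> Ns. apply: Habc.
  have [al Hal] := surjR Hl a e.
  have LIP : forall y, mul al (mul a y) = y.
    move=> y. apply: (canL Hl (a:=a)). by rewrite -Hm Hal er.
  have LIP2 : forall w, mul a (mul al w) = w.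
    move=> w. have [u Hu] := surjL Hl a w. by rewrite -Hu LIP.
  have Eb : b = mul al (mul a b) by rewrite LIP.
  have [_ [N2 _]] := Ns al c.
  by rewrite {2}Eb N2 LIP2.
apply: Hxni.
have Hiz : forall z, ~ in_nucleus mul z -> mul i z = mul z x.
  move=> z Nz. apply: (canR Hl (a:=i)).
  have [_ [_ Ni3]] := Ni i z. have [_ [_ Nx3]] := Ni z x.
  rewrite Ni3 -key // Nx3 Hxi er.
  have [Ni1 _] := Ni x z. by rewrite -Ni1 Hix el.
have E1 := key _ Nab.
have [Nx1 _] := Nx a b.
have [_ [Ni2 _]] := Ni a b.
have [_ [_ Nx3]] := Nx a b.
move: E1; rewrite -Nx1 key // Ni2 Hiz // -Nx3 => E1.
by apply: (canL Hl (a:=mul a b)).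
Qed.
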